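(* Let $G$ be a graph with Hermitian adjacency matrix $A$ and let $u$ be an arbitrary vertex of $G$. Then $G$ has universal perfect state transfer if and only if perfect state transfer occurs from $u$ to every vertex of $G$ (i.e. for every vertex $v$ there is $t>0$ with $|\langle v|e^{-\mathtt{i} A t}|u\rangle|=1$).
   Context: The continuous-time quantum walk on a graph with Hermitian adjacency matrix $A$ is $U(t)=\exp(-\mathtt{i} A t)$. Perfect state transfer occurs from vertex $v$ to vertex $w$ at time $t>0$ if $|\langle w| e^{-\mathtt{i} A t}|v\rangle|=1$. $G$ has universal perfect state transfer if for every pair of vertices $v,w$ (including $v=w$) perfect state transfer occurs from $v$ to $w$ at some time $t>0$. *)

(* Defs.v *)
From HB Require Import structures.
From mathcomp Require Import all_boot all_order all_algebra.
From mathcomp Require Import all_classical all_reals.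
From mathcomp Require Import topology normedtype sequences.
From mathcomp.real_closed Require Import complex.
Set Implicit Arguments. Unset Strict Implicit. Unset Printing Implicit Defensive.
Import Order.TTheory GRing.Theory Num.Theory.
Import numFieldNormedType.Exports.
Local Open Scope ring_scope.
Local Open Scope complex_scope.

Definition hermitian_mx (R : realType) (n : nat) (A : 'M[R[i]]_n) : Prop :=
  forall i j : 'I_n, A j i = (A i j)^*.

Definition expm_partial (R : realType) (n : nat) (A : 'M[R[i]]_n) (t : R) (N : nat)
  : 'M[R[i]]_n :=
  \sum_(k < N) ((- 'i * t%:C) ^+ k / (k`!)%:R) *: A ^+ k.

(* Entry (w,v) of U(t) = exp(-i A t) = sum_k (-i t A)^k / k!, defined as the
   limit of the partial sums, taken componentwise (real and imaginary parts). *)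
Definition walk (R : realType) (n : nat) (A : 'M[R[i]]_n) (t : R) (w v : 'I_n) : R[i] :=
  (limn (fun N => complex.Re (expm_partial A t N w v)))
  +i* (limn (fun N => complex.Im (expm_partial A t N w v))).

Definition pst (R : realType) (n : nat) (A : 'M[R[i]]_n) (v w : 'I_n) : Prop :=
  exists t : R, 0 < t /\ `|walk A t w v| = 1.

Definition universal_pst (R : realType) (n : nat) (A : 'M[R[i]]_n) : Prop :=
  forall v w : 'I_n, pst A v w.

(* Main.v *)
Require Import Defs.
From HB Require Import structures.
From mathcomp Require Import all_boot all_order all_algebra.
From mathcomp Require Import all_classical all_reals.
From mathcomp Require Import topology normedtype sequences.
From mathcomp Require Import exp.
From mathcomp Require Import ring lra zify.
From mathcomp.real_closed Require Import complex.
Import Order.TTheory GRing.Theory Num.Theory.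
Import numFieldNormedType.Exports.
Local Open Scope ring_scope.
Local Open Scope classical_set_scope.
Local Notation Re := complex.Re. Local Notation Im := complex.Im.
Set Implicit Arguments. Unset Strict Implicit. Unset Printing Implicit Defensive.
Definition cf {K : fieldType} (x : K) (k : nat) : K := x ^+ k / (k`!)%:R.

Lemma cD (K : numFieldType) (x y : K) k :
  \sum_(j < k.+1) cf x j * cf y (k - j) = cf (x + y) k.
Proof.
have f0 : forall m, (m`!)%:R != 0 :> K by move=> m; rewrite pnatr_eq0 -lt0n fact_gt0.
rewrite /cf addrC exprDn mulr_suml; apply: eq_bigr => j _.
have hj : (j <= k)%N by rewrite -ltnS.
rewrite -(bin_fact hj) natrM natrM -mulr_natr.
set a := j`!%:R; set b := (k-j)`!%:R; set c := 'C(k,j)%:R.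
have a0 : a != 0 by apply: f0.
have b0 : b != 0 by apply: f0.
have c0 : c != 0 by rewrite /c pnatr_eq0 -lt0n bin_gt0.
field.
by rewrite a0 b0 c0.
Qed.
Lemma tri (V : nmodType) (G : nat -> nat -> V) N :
  \sum_(k < N) \sum_(j < k.+1) G j (k - j)%N =
  \sum_(j < N) \sum_(l < N | (j + l < N)%N) G j l.
Proof.
elim: N => [|N IH]; first by rewrite !big_ord0.
rewrite big_ord_recr /= IH.
have E1 : forall j : 'I_N.+1, \sum_(l < N.+1 | (j + l < N.+1)%N) G j l =
   \sum_(l < N.+1 | (j + l < N)%N) G j l + \sum_(l < N.+1 | (j + l == N)%N) G j l.
  move=> j; rewrite (bigID (fun l : 'I_N.+1 => (j + l < N)%N)) /=.
  congr (_ + _); apply: eq_bigl => l.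
    by apply/andP/idP => [[]|h] //; split => //; apply: ltnW.
  by rewrite ltnS leq_eqVlt; case: ltngtP.
rewrite (eq_bigr _ (fun j _ => E1 j)) big_split /=.
congr (_ + _).
  rewrite [RHS]big_ord_recr /= [X in _ = _ + X]big_mkcond big1 ?addr0; last first.
    by move=> l _; rewrite ltnNge leq_addr.
  apply: eq_bigr => j _.
  rewrite [in RHS]big_mkcond big_ord_recr /= ifF ?addr0 -?big_mkcond //.
  by rewrite ltnNge leq_addl.
apply: eq_bigr => j _.
have hj : (N - j < N.+1)%N by rewrite ltnS leq_subr.
rewrite (big_pred1 (Ordinal hj)) /=.
  by [].
move=> l; rewrite /= -val_eqE /=.
have := ltn_ord j; rewrite ltnS => jN.
by apply/eqP/eqP; lia.
Qed.
Lemma prod_id (K : numFieldType) (V : algType K) (a : V) (x y : K) N :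
  (\sum_(k < N) cf x k *: a ^+ k) * (\sum_(k < N) cf y k *: a ^+ k)
  - \sum_(k < N) cf (x + y) k *: a ^+ k
  = \sum_(j < N) \sum_(l < N | (N <= j + l)%N) (cf x j * cf y l) *: a ^+ (j + l).
Proof.
pose G j l := (cf x j * cf y l) *: a ^+ (j + l).
have P1 : (\sum_(k < N) cf x k *: a ^+ k) * (\sum_(k < N) cf y k *: a ^+ k)
   = \sum_(j < N) \sum_(l < N) G j l.
  rewrite mulr_suml; apply: eq_bigr => j _; rewrite mulr_sumr; apply: eq_bigr => l _.
  by rewrite /G -scalerAl -scalerAr scalerA exprD.
have P2 : \sum_(k < N) cf (x + y) k *: a ^+ k
   = \sum_(j < N) \sum_(l < N | (j + l < N)%N) G j l.
  rewrite -tri; apply: eq_bigr => k _.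
  rewrite -cD scaler_suml; apply: eq_bigr => j _.
  by rewrite /G subnKC // -ltnS.
rewrite P1 P2 -sumrB; apply: eq_bigr => j _.
rewrite (bigID (fun l : 'I_N => (j + l < N)%N)) /= addrC addrK.
by apply: eq_bigl => l; rewrite -leqNgt.
Qed.
Section CvgC.
Variable R : realType.
Local Notation C := R[i].

Definition cvgC (u : nat -> C) (l : C) :=
  (fun N => Re (u N)) @ \oo --> Re l /\ (fun N => Im (u N)) @ \oo --> Im l.

Lemma ReD (a b : C) : Re (a + b) = Re a + Re b. Proof. by case: a; case: b. Qed.
Lemma ImD (a b : C) : Im (a + b) = Im a + Im b. Proof. by case: a; case: b. Qed.
Lemma ReN (a : C) : Re (- a) = - Re a. Proof. by case: a. Qed.
Lemma ImN (a : C) : Im (- a) = - Im a. Proof. by case: a. Qed.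
Lemma ReM (a b : C) : Re (a * b) = Re a * Re b - Im a * Im b.
Proof. by case: a; case: b. Qed.
Lemma ImM (a b : C) : Im (a * b) = Re a * Im b + Im a * Re b.
Proof. by case: a => ? ?; case: b => ? ? /=; rewrite addrC. Qed.
Lemma Re_sum (I : Type) (s : seq I) (P : pred I) (F : I -> C) :
  Re (\sum_(i <- s | P i) F i) = \sum_(i <- s | P i) Re (F i).
Proof. exact: (big_morph _ ReD). Qed.
Lemma Im_sum (I : Type) (s : seq I) (P : pred I) (F : I -> C) :
  Im (\sum_(i <- s | P i) F i) = \sum_(i <- s | P i) Im (F i).
Proof. exact: (big_morph _ ImD). Qed.

Lemma cvgC_uniq u l1 l2 : cvgC u l1 -> cvgC u l2 -> l1 = l2.
Proof.
case: l1 => a b; case: l2 => c d [h1 h2] [h3 h4] /=.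
by congr Complex; [exact: (cvg_unique _ h1 h3) | exact: (cvg_unique _ h2 h4)].
Qed.

Lemma cvgC_add u v a b : cvgC u a -> cvgC v b -> cvgC (fun N => u N + v N) (a + b).
Proof.
move=> [h1 h2] [h3 h4]; split.
  rewrite ReD; under eq_fun do rewrite ReD; exact: cvgD.
rewrite ImD; under eq_fun do rewrite ImD; exact: cvgD.
Qed.

Lemma cvgC_opp u a : cvgC u a -> cvgC (fun N => - u N) (- a).
Proof.
move=> [h1 h2]; split.
  rewrite ReN; under eq_fun do rewrite ReN; exact: cvgN.
rewrite ImN; under eq_fun do rewrite ImN; exact: cvgN.
Qed.

Lemma cvgC_mul u v a b : cvgC u a -> cvgC v b -> cvgC (fun N => u N * v N) (a * b).
Proof.
move=> [h1 h2] [h3 h4]; split.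
  rewrite ReM; under eq_fun do rewrite ReM; apply: cvgB; exact: cvgM.
rewrite ImM; under eq_fun do rewrite ImM; apply: cvgD; exact: cvgM.
Qed.

Lemma cvgC_cst a : cvgC (fun _ => a) a.
Proof. split; exact: cvg_cst. Qed.

Lemma cvgC_sum (I : Type) (s : seq I) (F : I -> nat -> C) (l : I -> C) :
  (forall i, cvgC (F i) (l i)) ->
  cvgC (fun N => \sum_(i <- s) F i N) (\sum_(i <- s) l i).
Proof.
move=> h; elim: s => [|i s IH].
  under eq_fun do rewrite big_nil; rewrite big_nil; exact: cvgC_cst.
under eq_fun do rewrite big_cons; rewrite big_cons; exact: cvgC_add.
Qed.

Lemma cvgC_ext u v l : (forall N, u N = v N) -> cvgC u l -> cvgC v l.
Proof. by move=> e; have -> : u = v by apply: funext. Qed.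

Lemma ReJ (a : C) : Re (conjc a) = Re a. Proof. by case: a. Qed.
Lemma ImJ (a : C) : Im (conjc a) = - Im a. Proof. by case: a. Qed.

Lemma cvgC_conj u l : cvgC u l -> cvgC (fun N => conjc (u N)) (conjc l).
Proof.
move=> [h1 h2]; split.
  by rewrite ReJ; under eq_fun do rewrite ReJ.
rewrite ImJ; under eq_fun do rewrite ImJ; exact: cvgN.
Qed.

End CvgC.
Section Norms.
Variable R : realType.
Local Notation C := R[i].

Lemma normC_le (z : C) (r : R) : `|z| <= r%:C%C -> `|Re z| <= r /\ `|Im z| <= r.
Proof.
rewrite normc_def lecR => h; split; apply: le_trans h; rewrite -sqrtr_sqr;
  apply: ler_wsqrtr; rewrite ?lerDl ?lerDr sqr_ge0 //.
Qed.

Lemma normC_real (r : R) : `|r%:C%C| = `|r|%:C%C.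
Proof. by rewrite normc_def /= expr0n /= addr0 sqrtr_sqr. Qed.

Lemma real_of_ge0 (z : C) : 0 <= z -> z = (Re z)%:C%C.
Proof. by move=> h; rewrite RRe_real // ger0_real. Qed.

Lemma normC_Re (z : C) : `|z| = (Re `|z|)%:C%C.
Proof. by rewrite -real_of_ge0. Qed.

Lemma cvgC_bound (u : nat -> C) (l : C) (d : nat -> R) :
  d @ \oo --> 0 -> (forall N, `|u N - l| <= (d N)%:C%C) -> cvgC u l.
Proof.
move=> hd hb.
have sq : forall f : nat -> R, forall a : R, (forall N, `|f N - a| <= d N) ->
    f @ \oo --> a.
  move=> f a hf; apply: (@squeeze_cvgr _ _ _ _ (fun N => a - d N) (fun N => a + d N)).
  - near=> N; have := hf N; rewrite ler_norml => /andP[h1 h2].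
    by apply/andP; split; lra.
  - by rewrite -[X in _ --> X]subr0; apply: cvgB => //; exact: cvg_cst.
  - by rewrite -[X in _ --> X]addr0; apply: cvgD => //; exact: cvg_cst.
split; apply: sq => N; have [h1 h2] := normC_le (hb N).
  by rewrite -ReN -ReD.
by rewrite -ImN -ImD.
Unshelve. all: by end_near.
Qed.
End Norms.
Section Walk.
Variable R : realType.
Variable n : nat.
Variable A : 'M[R[i]]_n.+1.
Local Notation C := R[i].

Definition Sx (x : C) N : 'M[C]_n.+1 := \sum_(k < N) cf x k *: A ^+ k.

Lemma expm_Sx t N : expm_partial A t N = Sx (- 'i%C * t%:C%C) N.
Proof. by []. Qed.

Lemma Sx_entry x N w v : Sx x N w v = \sum_(k < N) cf x k * (A ^+ k) w v.
Proof. by rewrite /Sx summxE; apply: eq_bigr => k _; rewrite mxE. Qed.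

Definition Bc : C := \sum_i \sum_j `|A i j|.
Definition Br : R := Re Bc.

Lemma Bc_ge0 : 0 <= Bc.
Proof. by apply: sumr_ge0 => i _; apply: sumr_ge0 => j _. Qed.

Lemma BcE : Bc = Br%:C%C.
Proof. exact: real_of_ge0 Bc_ge0. Qed.

Lemma Br_ge0 : 0 <= Br.
Proof. by rewrite -ler0c -BcE Bc_ge0. Qed.

Lemma row_bound w : \sum_m `|A w m| <= Bc.
Proof.
rewrite /Bc [X in _ <= X](bigD1 w) //= lerDl; apply: sumr_ge0 => i _; apply: sumr_ge0 => j _.
by [].
Qed.

Lemma powA_bound k w v : `|(A ^+ k) w v| <= Bc ^+ k.
Proof.
elim: k w v => [|k IH] w v.
  rewrite !expr0 mxE; case: (w == v) => /=; by rewrite ?normr1 ?normr0.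
rewrite exprS -mulmxE mxE.
apply: le_trans (ler_norm_sum _ _ _) _.
apply: le_trans (_ : \sum_m `|A w m| * Bc ^+ k <= _).
  by apply: ler_sum => m _; rewrite normrM ler_wpM2l.
by rewrite -mulr_suml exprS ler_wpM2r ?exprn_ge0 ?Bc_ge0 ?row_bound.
Qed.

End Walk.
Lemma normcf (K : numFieldType) (x : K) k : `|cf x k| = cf `|x| k.
Proof. by rewrite /cf normrM normfV normrX normr_nat. Qed.

Lemma cfM (K : fieldType) (r q : K) k : cf (r * q) k = cf r k * q ^+ k.
Proof. by rewrite /cf exprMn mulrAC. Qed.

Lemma cf_ge0 (K : numFieldType) (r : K) k : 0 <= r -> 0 <= cf r k.
Proof. by move=> h; rewrite /cf divr_ge0 ?exprn_ge0. Qed.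

Lemma cfC (R : realType) (r : R) k : cf (r%:C%C) k = (cf r k)%:C%C.
Proof. by rewrite /cf rmorphM rmorphXn fmorphV rmorph_nat. Qed.

Section Walk2.
Variable R : realType.
Variable n : nat.
Variable A : 'M[R[i]]_n.+1.
Local Notation C := R[i].
Local Notation Sx := (Sx A).
Local Notation Br := (Br A).
Local Notation Bc := (Bc A).

Lemma term_bound (x : C) k w v :
  `|cf x k * (A ^+ k) w v| <= (cf (Re `|x| * Br) k)%:C%C.
Proof.
have e : cf `|x| k = (cf (Re `|x|) k)%:C%C by rewrite {1}normC_Re cfC.
have e2 : Bc ^+ k = (Br ^+ k)%:C%C by rewrite BcE rmorphXn.
have e3 : (cf (Re `|x| * Br) k)%:C%C = (cf (Re `|x|) k)%:C%C * (Br ^+ k)%:C%C.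
  by rewrite cfM rmorphM.
rewrite normrM normcf e3 -e -e2.
by rewrite ler_wpM2l ?cf_ge0 ?powA_bound.
Qed.

Lemma cvg_Re_Sx x w v : cvgn (fun N => Re (Sx x N w v)).
Proof.
pose u k := Re (cf x k * (A ^+ k) w v).
have -> : (fun N => Re (Sx x N w v)) = series u.
  apply: funext => N; rewrite Sx_entry Re_sum /series /= big_mkord.
  by [].

apply: (@normed_cvg _ R^o).
apply: (series_le_cvg _ _ _ (is_cvg_series_exp_coeff (Re `|x| * Br))).
- by move=> k; rewrite /= normr_ge0.
- move=> k; apply: exp_coeff_ge0; rewrite mulr_ge0 ?Br_ge0 //.
  by rewrite -ler0c -normC_Re.
- by move=> k; have [] := normC_le (term_bound x k w v).
Qed.

Lemma cvg_Im_Sx x w v : cvgn (fun N => Im (Sx x N w v)).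
Proof.
pose u k := Im (cf x k * (A ^+ k) w v).
have -> : (fun N => Im (Sx x N w v)) = series u.
  apply: funext => N; rewrite Sx_entry Im_sum /series /= big_mkord.
  by [].
apply: (@normed_cvg _ R^o).
apply: (series_le_cvg _ _ _ (is_cvg_series_exp_coeff (Re `|x| * Br))).
- by move=> k; rewrite /= normr_ge0.
- move=> k; apply: exp_coeff_ge0; rewrite mulr_ge0 ?Br_ge0 //.
  by rewrite -ler0c -normC_Re.
- by move=> k; have [] := normC_le (term_bound x k w v).
Qed.

Lemma cvg_walk t w v : cvgC (fun N => Sx (- 'i%C * t%:C%C) N w v) (walk A t w v).
Proof. split; [exact: cvg_Re_Sx | exact: cvg_Im_Sx]. Qed.

End Walk2.
Lemma real_id (R : realType) (a b : R) N :
  series (exp_coeff a) N * series (exp_coeff b) N - series (exp_coeff (a + b)) N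
  = \sum_(j < N) \sum_(l < N | (N <= j + l)%N) cf a j * cf b l.
Proof.
have H := prod_id (V := R^o) 1 a b N.
have F : forall x, \sum_(k < N) cf x k *: (1 : R^o) ^+ k = \sum_(k < N) exp_coeff x k.
  by move=> x; apply: eq_bigr => k _; rewrite expr1n; exact: mulr1.
rewrite !F in H.
rewrite /series /= !big_mkord H.
apply: eq_bigr => j _; apply: eq_bigr => l _.
by rewrite expr1n; exact: mulr1.
Qed.

Lemma real_cvg0 (R : realType) (a b : R) :
  (fun N => series (exp_coeff a) N * series (exp_coeff b) N
            - series (exp_coeff (a + b)) N) @ \oo --> (0 : R).
Proof.
rewrite -(subrr (expR a * expR b)) -{2}expRD.
apply: cvgB; last exact: is_cvg_series_exp_coeff.
apply: cvgM; exact: is_cvg_series_exp_coeff.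
Qed.
Section Walk3.
Variable R : realType.
Variable n : nat.
Variable A : 'M[R[i]]_n.+1.
Local Notation C := R[i].
Local Notation Sx := (Sx A).
Local Notation Br := (Br A).
Local Notation Bc := (Bc A).

Lemma cfB (x : C) j : `|cf x j| * Bc ^+ j = (cf (Re `|x| * Br) j)%:C%C.
Proof.
have e : cf `|x| j = (cf (Re `|x|) j)%:C%C by rewrite {1}normC_Re cfC.
have e2 : Bc ^+ j = (Br ^+ j)%:C%C by rewrite BcE rmorphXn.
have e3 : (cf (Re `|x| * Br) j)%:C%C = (cf (Re `|x|) j)%:C%C * (Br ^+ j)%:C%C.
  by rewrite cfM rmorphM.
by rewrite e3 -e -e2 normcf.
Qed.

Lemma D_bound (xs xt : C) N y x :
  `|(Sx xs N * Sx xt N - Sx (xs + xt) N) y x| <=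
  (series (exp_coeff (Re `|xs| * Br)) N * series (exp_coeff (Re `|xt| * Br)) N
   - series (exp_coeff (Re `|xs| * Br + Re `|xt| * Br)) N)%:C%C.
Proof.
rewrite /Sx prod_id real_id !rmorph_sum summxE.
apply: le_trans (ler_norm_sum _ _ _) _; apply: ler_sum => j _.
rewrite summxE; apply: le_trans (ler_norm_sum _ _ _) _.
rewrite rmorph_sum; apply: ler_sum => l _.
rewrite mxE rmorphM.
apply: le_trans (_ : _ <= (`|cf xs j| * Bc ^+ j) * (`|cf xt l| * Bc ^+ l)) _; last first.
  by rewrite !cfB; exact: lexx.
rewrite [X in _ <= X]mulrACA -exprD normrM normrM ler_wpM2l ?mulr_ge0 //.
exact: powA_bound.
Qed.

Lemma normx (t : R) : `|- 'i%C * t%:C%C| = `|t|%:C%C.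
Proof.
rewrite normrM normrN normC_real.
have -> : `|'i%C : C| = 1 by rewrite normc_def /= expr0n expr1n add0r sqrtr1.
by rewrite mul1r.
Qed.

Lemma walk_add (s t : R) y x :
  walk A (s + t) y x = \sum_m walk A s y m * walk A t m x.
Proof.
set xs := - 'i%C * s%:C%C; set xt := - 'i%C * t%:C%C.
apply: (cvgC_uniq (cvg_walk A (s + t) y x)).
have ex : - 'i%C * (s + t)%:C%C = xs + xt by rewrite rmorphD mulrDr.
pose P N := (Sx xs N * Sx xt N) y x.
pose D N := (Sx xs N * Sx xt N - Sx (xs + xt) N) y x.
apply: (@cvgC_ext _ (fun N => P N + - D N)).
  by move=> N; rewrite ex /P /D !mxE opprB addrC subrK.
rewrite -[X in cvgC _ X]addr0 -[X in cvgC _ (_ + X)]oppr0.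
apply: cvgC_add; last apply: cvgC_opp.
  apply: (@cvgC_ext _ (fun N => \sum_m Sx xs N y m * Sx xt N m x)).
    by move=> N; rewrite /P -mulmxE mxE.
  refine (@cvgC_sum _ _ _ (fun m N => Sx xs N y m * Sx xt N m x) (fun m => walk A s y m * walk A t m x) _).
  move=> m; apply: cvgC_mul; exact: cvg_walk.
apply: (cvgC_bound (real_cvg0 (Re `|xs| * Br) (Re `|xt| * Br))).
by move=> N; rewrite subr0 /D; exact: D_bound.
Qed.
End Walk3.
Section Walk4.
Variable R : realType.
Variable n : nat.
Variable A : 'M[R[i]]_n.+1.
Hypothesis hA : hermitian_mx A.
Local Notation C := R[i].
Local Notation Sx := (Sx A).

Lemma conjcM (a b : C) : conjc (a * b) = conjc a * conjc b.
Proof. exact: rmorphM. Qed.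
Lemma conjc_sum (I : Type) (r : seq I) (P : pred I) (F : I -> C) :
  conjc (\sum_(i <- r | P i) F i) = \sum_(i <- r | P i) conjc (F i).
Proof. exact: rmorph_sum. Qed.
Lemma conjcX (a : C) k : conjc (a ^+ k) = conjc a ^+ k.
Proof. exact: rmorphXn. Qed.
Lemma conjcV (a : C) : conjc (a ^-1) = (conjc a)^-1.
Proof. exact: fmorphV. Qed.

Lemma powA_conj k w v : conjc ((A ^+ k) w v) = (A ^+ k) v w.
Proof.
elim: k w v => [|k IH] w v.
  by rewrite !expr0 !mxE conjc_nat eq_sym.
rewrite [in LHS]exprS [in RHS]exprSr -!mulmxE !mxE conjc_sum; apply: eq_bigr => m _.
by rewrite conjcM IH -hA mulrC.
Qed.

Lemma Sx_conj x N w v : conjc (Sx x N w v) = Sx (conjc x) N v w.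
Proof.
rewrite !Sx_entry conjc_sum; apply: eq_bigr => k _.
by rewrite conjcM powA_conj /cf conjcM conjcX conjcV conjc_nat.
Qed.

Lemma conj_x (t : R) : conjc (- 'i%C * t%:C%C) = - 'i%C * (- t)%:C%C.
Proof. by apply/eqP; rewrite eq_complex /=; apply/andP; split; apply/eqP; ring. Qed.

Lemma walk_conj t w v : walk A (- t) v w = conjc (walk A t w v).
Proof.
apply: (cvgC_uniq (cvg_walk A (- t) v w)).
apply: cvgC_ext (cvgC_conj (cvg_walk A t w v)).
by move=> N; rewrite Sx_conj conj_x.
Qed.

Lemma cvgC_ev (u : nat -> C) l : (forall N, u N.+1 = l) -> cvgC u l.
Proof.
move=> h; split; apply: cvg_near_cst; near=> N;
  have hN : (0 < N)%N by near: N; exact: nbhs_infty_gt.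
  by rewrite -(prednK hN) h.
by rewrite -(prednK hN) h.
Unshelve. all: by end_near.
Qed.

Lemma walk0 w v : walk A 0 w v = (w == v)%:R.
Proof.
apply: (cvgC_uniq (cvg_walk A 0 w v)); apply: cvgC_ev => N.
rewrite mulr0 /Sx big_ord_recl big1 ?addr0.
  by rewrite /cf !expr0 divr1 scale1r mxE.
by move=> i _; rewrite /cf expr0n /= mul0r scale0r.
Qed.

Lemma normJ (z : C) : `|conjc z| = `|z|.
Proof. by case: z => a b; rewrite !normc_def /= sqrrN. Qed.

Lemma unitary t x : \sum_w `|walk A t w x| ^+ 2 = 1.
Proof.
have := walk_add A (- t) t x x; rewrite addNr walk0 eqxx mulr1n => ->.
apply: eq_bigr => m _; rewrite walk_conj sqr_normc mulrC.
by [].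
Qed.

Lemma col_zero t x z m : `|walk A t z x| = 1 -> m != z -> walk A t m x = 0.
Proof.
move=> h hm; have := unitary t x; rewrite (bigD1 z) //= h expr1n.
move=> /(congr1 (fun q => q - 1)); rewrite addrC addrK subrr => hs.
have := psumr_eq0P (F := fun i => `|walk A t i x| ^+ 2) (fun i _ => exprn_ge0 _ (normr_ge0 _)) hs hm.
by move=> /eqP; rewrite sqrf_eq0 normr_eq0 => /eqP.
Qed.

Lemma compose s t x z y :
  `|walk A t z x| = 1 -> `|walk A s y z| = 1 -> `|walk A (s + t) y x| = 1.
Proof.
move=> h1 h2; rewrite walk_add (bigD1 z) //= big1 ?addr0.
  by rewrite normrM h1 h2 mulr1.
by move=> m hm; rewrite (col_zero h1 hm) mulr0.
Qed.

Lemma reverse t x z : `|walk A t z x| = 1 -> `|walk A (- t) x z| = 1.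
Proof. by rewrite walk_conj normJ. Qed.

End Walk4.
Theorem lemma2 (R : realType) (n : nat) (A : 'M[R[i]]_n) (u : 'I_n) :
  hermitian_mx A ->
  (universal_pst A <-> forall v : 'I_n, pst A u v).
Proof.
case: n A u => [|m] A u hA; first by case: u.
split; first by move=> H v; apply: H.
move=> H v w.
have [t1 [t1p h1]] := H v.
have [t2 [t2p h2]] := H w.
have [tau [taup h3]] := H u.
have per : forall k : nat, `|walk A (k%:R * tau) u u| = 1.
  elim=> [|k IH]; first by rewrite mul0r (walk0 A) eqxx normr1.
  have -> : (k.+1)%:R * tau = tau + k%:R * tau.
    by rewrite -[k.+1]addn1 natrD mulrDl mul1r addrC.
  exact: (compose hA IH h3).
set k := (Num.truncn (t1 / tau)).+1.
have hk : t1 < k%:R * tau by rewrite -ltr_pdivrMr // truncnS_gt.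
exists (t2 + (k%:R * tau + - t1)); split; first by lra.
apply: (compose hA _ h2).
apply: (compose hA _ (per k)).
exact: (reverse hA h1).
Qed.
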